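(* Let $G$ be a directed acyclic graph on $[n]$ and $H\subseteq G$ a subgraph. Then $Q_H$ is a face of $\tilde Q_G$ if and only if $H$ is path consistent and admissible with respect to $G$.
   Context: Conventions: $G$ is a directed acyclic graph with vertex set $[n]$, every edge $(i,j)\in E(G)$ satisfying $i<j$. A subgraph $H\subseteq G$ means $V(H)=[n]$ and $E(H)\subseteq E(G)$; $H^{un}$ is the underlying undirected graph. $Q_H=\mathrm{conv}\{\mathbf e_i-\mathbf e_j:(i,j)\in E(H)\}$, $\tilde Q_G=\mathrm{conv}(\{\mathbf 0\}\cup\{\mathbf e_i-\mathbf e_j:(i,j)\in E(G)\})$ in $\mathbb R^n$. Path consistency: for an undirected path $p$ in $H^{un}$ from $u$ to $v$, let $\delta(p)$ be the number of edges traversed (from $u$ to $v$) along their orientation minus the number traversed against it. $H$ is path consistent if any two undirected paths in $H^{un}$ with the same endpoints $u,v$ have equal $\delta$; this common value is $\ell_{uv}$. Within a connected component $C$ of $H^{un}$, a weight source is a vertex $u_*\in C$ such that $\ell_{u_*v_*}=\max_{u,v\in C}\ell_{uv}$ for some $v_*\in C$. The weight function $w:[n]\to\mathbb Z$ is $w(i)=\ell_{u_*i}$ where $u_*$ is any weight source in the component of $i$ (independent of the choice). $H_{comp}$: directed multigraph whose vertices are the connected components of $H^{un}$, with one edge from the component of $u$ to the component of $v$ for each $(u,v)\in E(G)\setminus E(H)$. For such an edge $e$ corresponding to $(u,v)$, the weight decrease is $\mathsf{wd}(e)=w(u)-w(v)$. Admissibility: a path consistent $H$ is admissible with respect to $G$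 if for every directed cycle $\mathcal C$ of $H_{comp}$ (including loops, which are cycles of length 1), $\sum_{e\in\mathcal C}\mathsf{wd}(e)>-|\mathcal C|$, where $|\mathcal C|$ is the number of edges of $\mathcal C$. *)

(* Defs.v *)
From HB Require Import structures.
From mathcomp Require Import all_boot all_order all_algebra.
Set Implicit Arguments. Unset Strict Implicit. Unset Printing Implicit Defensive.
Import Order.TTheory GRing.Theory Num.Theory.
Local Open Scope ring_scope.

(* Vertices [n] are represented by 'I_n = {0,..,n-1} (order preserved).
   A (di)graph on [n] is its edge set, a {set 'I_n * 'I_n}; an edge (i,j) is i -> j. *)

Section Polytopes.
Variables (R : realFieldType) (n : nat).

Definition conv (S : seq 'rV[R]_n) : 'rV[R]_n -> Prop :=
  fun x => exists lam : 'I_(size S) -> R,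
    (forall i, 0 <= lam i) /\ \sum_i lam i = 1 /\
    x = \sum_i lam i *: S`_i.

Definition dotv (c x : 'rV[R]_n) : R := \sum_k c 0 k * x 0 k.

(* F is a face of the polytope P: F = P ∩ {c.x = b} for a valid inequality c.x <= b
   (the empty face and P itself included). *)
Definition is_face (F P : 'rV[R]_n -> Prop) : Prop :=
  exists (c : 'rV[R]_n) (b : R),
    (forall x, P x -> dotv c x <= b) /\
    (forall x, F x <-> (P x /\ dotv c x = b)).

Definition edge_vec (e : 'I_n * 'I_n) : 'rV[R]_n :=
  delta_mx 0 e.1 - delta_mx 0 e.2.

Definition Q (H : {set 'I_n * 'I_n}) : 'rV[R]_n -> Prop :=
  conv [seq edge_vec e | e <- enum H].

Definition Qt (G : {set 'I_n * 'I_n}) : 'rV[R]_n -> Prop :=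
  conv (0 :: [seq edge_vec e | e <- enum G]).

End Polytopes.

Section Combinatorics.
Variable n : nat.
Implicit Types (H G : {set 'I_n * 'I_n}) (u v a b : 'I_n).

Definition hun H : rel 'I_n := fun a b => ((a, b) \in H) || ((b, a) \in H).

Definition step_val H a b : int :=
  if (a, b) \in H then 1 else if (b, a) \in H then -1 else 0.

Fixpoint delta H u (p : seq 'I_n) : int :=
  match p with
  | [::] => 0
  | a :: p' => step_val H u a + delta H a p'
  end.

Definition upath H u v (p : seq 'I_n) : bool :=
  [&& path (hun H) u p, uniq (u :: p) & last u p == v].

Definition path_consistent H : Prop :=
  forall u v p q, upath H u v p -> upath H u v q -> delta H u p = delta H u q.

Definition is_ell H u v (l : int) : Prop :=
  exists p, upath H u v p /\ delta H u p = l.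

Definition weight_source H us : Prop :=
  exists vs l, connect (hun H) us vs /\ is_ell H us vs l /\
    (forall a b la, connect (hun H) us a -> connect (hun H) us b ->
       is_ell H a b la -> la <= l).

Definition is_weight H (w : 'I_n -> int) : Prop :=
  forall i, exists us, connect (hun H) us i /\ weight_source H us /\ is_ell H us i (w i).

(* A directed cycle of H_comp of length k.+1: its edges f 0, ..., f k are edges
   (u,v) of G not in H; the head component of each edge is the tail component of
   the next (cyclically); the visited components (tails) are pairwise distinct. *)
Definition comp_cycle G H (k : nat) (f : 'I_k.+1 -> 'I_n * 'I_n) : Prop :=
  [/\ forall i, f i \in G :\: H,
      forall i, connect (hun H) (f i).2 (f (ordS i)).1 &
      forall i j, i != j -> ~~ connect (hun H) (f i).1 (f j).1].

Definition admissible G H : Prop :=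
  forall w, is_weight H w ->
  forall k (f : 'I_k.+1 -> 'I_n * 'I_n), comp_cycle G H f ->
    - (k.+1)%:Z < \sum_(i < k.+1) (w (f i).1 - w (f i).2).

End Combinatorics.

(* Main.v *)
Require Import Defs.
From HB Require Import structures.
From mathcomp Require Import all_boot all_order all_algebra zify ring lra.
Set Implicit Arguments. Unset Strict Implicit. Unset Printing Implicit Defensive.
Import Order.TTheory GRing.Theory Num.Theory.
Local Open Scope ring_scope.

Lemma conv_seqP (R : realFieldType) (n : nat) (T : finType) (s : seq T)
  (f : T -> 'rV[R]_n) x : uniq s ->
  conv [seq f e | e <- s] x <-> exists mu : T -> R, (forall e, 0 <= mu e) /\
    \sum_(e <- s) mu e = 1 /\ x = \sum_(e <- s) mu e *: f e.
Proof.
case: s => [|d s0] Us.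
  split; move=> [lam [_ [H _]]]; move: H; rewrite ?big_ord0 ?big_nil => /eqP;
  by rewrite eq_sym oner_eq0.
set s := d :: s0.
have Hin : forall i : 'I_(size [seq f e | e <- s]), nth d s i \in s.
  by move=> i; apply: mem_nth; rewrite -(size_map f) ltn_ord.
split.
  move=> [lam [L0 [L1 Lx]]].
  exists (fun e => \sum_(i < size [seq f e | e <- s] | nth d s i == e) lam i).
  split; first by move=> e; apply: sumr_ge0 => i _.
  split.
    rewrite big_uniq // -L1 [RHS](@partition_big _ _ _ _ _ _ xpredT (fun i : 'I_(size [seq f e | e <- s]) => nth d s i) (fun e => e \in s)) //.
  rewrite Lx [RHS]big_uniq // (partition_big (fun i : 'I_(size [seq f e | e <- s]) => nth d s i) (fun e => e \in s)) //.
  apply: eq_bigr => e _; rewrite scaler_suml; apply: eq_bigr => i /eqP <-.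
  by rewrite (nth_map d) // -(size_map f) ltn_ord.
move=> [mu [M0 [M1 Mx]]].
exists (fun i => mu (nth d s i)); split => //; split.
  rewrite -M1 (big_nth d) big_mkord.
  rewrite -(big_mkord xpredT (fun i => mu (nth d s i))).
  by rewrite size_map big_mkord.
rewrite Mx (big_nth d) big_mkord.
rewrite -(big_mkord xpredT (fun i => mu (nth d s i) *: [seq f e | e <- s]`_i)).
rewrite size_map big_mkord; apply: eq_bigr => i _.
by rewrite (nth_map d).
Qed.

Section Poly.
Variables (R : realFieldType) (n : nat).
Implicit Types (A G H : {set 'I_n * 'I_n}).

Lemma QP A x : Q A x <-> exists mu : 'I_n * 'I_n -> R, (forall e, 0 <= mu e) /\
  \sum_(e in A) mu e = 1 /\ x = \sum_(e in A) mu e *: edge_vec R e.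
Proof.
apply: iff_trans (conv_seqP _ _ (enum_uniq _)) _.
by split=> -[mu [M0 [M1 Mx]]]; exists mu; rewrite ?big_enum in M1 Mx *.
Qed.

Lemma QtP A x : Qt A x <-> exists (mu0 : R) (mu : 'I_n * 'I_n -> R), 0 <= mu0 /\
  (forall e, 0 <= mu e) /\ mu0 + \sum_(e in A) mu e = 1 /\
  x = \sum_(e in A) mu e *: edge_vec R e.
Proof.
pose g (o : option ('I_n * 'I_n)) := if o is Some e then edge_vec R e else 0.
rewrite /Qt; have -> : (0 :: [seq edge_vec R e | e <- enum A]) = [seq g o | o <- None :: [seq Some e | e <- enum A]].
  by rewrite /= -map_comp.
apply: iff_trans (conv_seqP _ _ _) _.
  rewrite /= map_inj_uniq ?enum_uniq ?andbT; last by move=> a b [].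
  by apply/mapP => -[].
split.
  move=> [mu [M0 [M1 Mx]]]; exists (mu None), (fun e => mu (Some e)).
  split => //; split => //; split.
    by rewrite -M1 big_cons big_map big_enum.
  by rewrite Mx big_cons big_map big_enum /= scaler0 add0r.
move=> [mu0 [mu [M00 [M0 [M1 Mx]]]]].
exists (fun o => if o is Some e then mu e else mu0); split; first by case.
split; first by rewrite big_cons big_map big_enum.
by rewrite Mx big_cons big_map big_enum /= scaler0 add0r.
Qed.

Lemma dotv_sum (c : 'rV[R]_n) (I : finType) (P : pred I) (mu : I -> R) (v : I -> 'rV[R]_n) :
  dotv c (\sum_(i | P i) mu i *: v i) = \sum_(i | P i) mu i * dotv c (v i).
Proof.
rewrite /dotv; under eq_bigr => k _ do rewrite summxE big_distrr.
rewrite exchange_big; apply: eq_bigr => i _; rewrite big_distrr.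
apply: eq_bigr => k _; rewrite !mxE; exact: mulrCA.
Qed.

Lemma dotv_edge (c : 'rV[R]_n) e : dotv c (edge_vec R e) = c 0 e.1 - c 0 e.2.
Proof.
have dd : forall i, \sum_k c 0 k * (((0 : 'I_1) == 0) && (k == i))%:R = c 0 i.
  move=> i; rewrite (bigD1 i) //= big1 => [|k nk]; first by rewrite !eqxx mulr1 addr0.
  by rewrite (negbTE nk) mulr0.
rewrite /dotv /edge_vec; under eq_bigr => k _ do rewrite !mxE mulrBr.
by rewrite sumrB !dd.
Qed.

Lemma dotv0 (c : 'rV[R]_n) : dotv c 0 = 0.
Proof. by rewrite /dotv big1 // => k _; rewrite mxE mulr0. Qed.

Lemma sum_GH (V : zmodType) G H (F : 'I_n * 'I_n -> V) : H \subset G ->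
  (forall e, e \in G -> e \notin H -> F e = 0) ->
  \sum_(e in G) F e = \sum_(e in H) F e.
Proof.
move=> hHG hF; rewrite (bigID (fun e => e \in H)) /= [X in _ + X]big1 ?addr0.
  by apply: eq_bigl => e; rewrite andb_idl // => /(subsetP hHG).
by move=> e /andP[]; apply: hF.
Qed.

Definition cutv (t : nat) : 'rV[R]_n := \row_k ((k <= t)%N)%:R.
Definition chi (e : 'I_n * 'I_n) t := ((e.1 <= t) && (t < e.2))%N.

Lemma dot_cut (e : 'I_n * 'I_n) t : (e.1 < e.2)%N -> dotv (cutv t) (edge_vec R e) = (chi e t)%:R.
Proof.
move=> lt; rewrite dotv_edge !mxE /chi.
case: (leqP e.1 t) => h1; case: (leqP e.2 t) => h2 /=; rewrite ?subrr ?subr0 //.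
exfalso; lia.
Qed.

Lemma cut_lemma A (mu : 'I_n * 'I_n -> R) x :
  (forall e, e \in A -> (e.1 < e.2)%N) -> (forall e, 0 <= mu e) ->
  \sum_(e in A) mu e = 1 -> x = \sum_(e in A) mu e *: edge_vec R e ->
  x != 0 /\ (forall u v : 'I_n, (u < v)%N -> x = edge_vec R (u, v) -> (u, v) \in A).
Proof.
move=> hA M0 M1 Mx.
have [e0 He0 Hpos] : exists2 e0, e0 \in A & 0 < mu e0.
  case: (pickP [pred e | (e \in A) && (0 < mu e)]) => [e0 /andP[] | N]; first by exists e0.
  move: M1; rewrite big1 => [M1|e eA]; first by move/eqP: M1; rewrite eq_sym oner_eq0.
  by apply/eqP; rewrite eq_le M0 andbT leNgt; have := N e; rewrite /= eA /= => ->.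
have phiE : forall t, dotv (cutv t) x = \sum_(e in A) mu e * (chi e t)%:R.
  by move=> t; rewrite Mx dotv_sum; apply: eq_bigr => e eA; rewrite dot_cut // hA.
have Ssplit : forall t, \sum_(e in A) mu e * (chi e t)%:R =
   mu e0 * (chi e0 t)%:R + \sum_(e in A | e != e0) mu e * (chi e t)%:R.
  by move=> t; rewrite (bigD1 e0).
have rest0 : forall t, 0 <= \sum_(e in A | e != e0) mu e * (chi e t)%:R.
  by move=> t; apply: sumr_ge0 => e _; rewrite mulr_ge0.
have rest1 : forall t, \sum_(e in A | e != e0) mu e * (chi e t)%:R <= 1 - mu e0.
  move=> t; have S1 : \sum_(e in A | e != e0) mu e = 1 - mu e0 by rewrite -M1 [in RHS](bigD1 e0) //= addrAC subrr add0r.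
  rewrite -S1; apply: ler_sum => e _.
  by case: (chi e t); rewrite ?mulr1 ?mulr0.
have lo : forall t, chi e0 t -> 0 < dotv (cutv t) x.
  move=> t ct; rewrite phiE Ssplit ct mulr1.
  by apply: (lt_le_trans Hpos); rewrite lerDl.
have hi : forall t, ~~ chi e0 t -> dotv (cutv t) x < 1.
  move=> t ct; rewrite phiE Ssplit (negbTE ct) mulr0 add0r.
  by apply: (le_lt_trans (rest1 t)); rewrite ltrBlDr ltrDl.
split.
  apply/eqP => x0; have := lo e0.1; rewrite x0 dotv0 ltxx /chi leqnn hA //=.
  by move=> /(_ isT).
move=> u v uv xe.
have same : forall t, chi e0 t = chi (u, v) t.
  move=> t; have := @dot_cut (u, v) t uv; rewrite -xe => dE.
  case c0 : (chi e0 t).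
    by have := lo t c0; rewrite dE; case: (chi (u,v) t); rewrite ?ltxx.
  by have := hi t (negbT c0); rewrite dE; case: (chi (u,v) t); rewrite ?ltxx.
have lt0 := hA _ He0.
have s1 := same e0.1; have s2 := same u; have s3 := same e0.2; have s4 := same v.
move: s1 s2 s3 s4; rewrite /chi /= leqnn lt0 uv ltnn !andbT !andbF /=.
move=> s1 s2 s3 s4.
have e1 : e0.1 = u :> nat by move: s1 s2 s3 s4 lt0 uv; rewrite leqnn ltnn /=; lia.
have e2 : e0.2 = v :> nat by move: s1 s2 s3 s4 lt0 uv; rewrite leqnn ltnn /=; lia.
suff -> : (u, v) = e0 by [].
by case: e0 e1 e2 {same He0 Hpos lt0 Ssplit rest0 rest1 lo hi s1 s2 s3 s4} => a b /= ea eb; congr pair; apply: val_inj.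
Qed.


Lemma edge_in_Q A e : e \in A -> Q A (edge_vec R e).
Proof.
move=> eA; apply/QP; exists (fun e' => (e' == e)%:R); split; first by move=> e'; rewrite ler0n.
split.
  by rewrite (bigD1 e) //= eqxx big1 ?addr0 // => e' /andP[_ /negbTE ->].
rewrite (bigD1 e) //= eqxx scale1r big1 ?addr0 // => e' /andP[_ /negbTE ->].
by rewrite scale0r.
Qed.

Lemma edge_in_Qt A e : e \in A -> Qt A (edge_vec R e).
Proof.
move=> eA; apply/QtP; exists 0, (fun e' => (e' == e)%:R); split => //.
split; first by move=> e'; rewrite ler0n.
split.
  by rewrite add0r (bigD1 e) //= eqxx big1 ?addr0 // => e' /andP[_ /negbTE ->].
rewrite (bigD1 e) //= eqxx scale1r big1 ?addr0 // => e' /andP[_ /negbTE ->].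
by rewrite scale0r.
Qed.

Lemma zero_in_Qt A : Qt A (0 : 'rV[R]_n).
Proof.
apply/QtP; exists 1, (fun _ => 0); split => //; split => //.
by rewrite big1 ?addr0 //; rewrite big1 // => e _; rewrite scale0r.
Qed.

Definition potH G H (c : 'I_n -> R) :=
  (forall e, e \in H -> c e.1 - c e.2 = 1) /\ (forall e, e \in G :\: H -> c e.1 - c e.2 < 1).

Lemma face_pot G H : (forall e, e \in G -> (e.1 < e.2)%N) -> H \subset G ->
  is_face (@Q R n H) (@Qt R n G) -> exists c, potH G H c.
Proof.
move=> hG hHG [c [b [Hle Hiff]]].
have hH : forall e, e \in H -> (e.1 < e.2)%N by move=> e /(subsetP hHG); apply: hG.
case: (set_0Vmem H) => [H0 | [e0 He0]].
  exists (fun k => (k : nat)%:R); split => [e|e]; first by rewrite H0 inE.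
  rewrite inE => /andP[_ eG]; apply: (@lt_le_trans _ _ 0); last by [].
  by rewrite subr_lt0 ltr_nat hG.
have onH : forall e, e \in H -> c 0 e.1 - c 0 e.2 = b.
  by move=> e eH; rewrite -dotv_edge; have [] := (Hiff _).1 (edge_in_Q eH).
have b0 : 0 <= b by rewrite -(dotv0 c); apply: Hle; apply: zero_in_Qt.
have bpos : 0 < b.
  rewrite lt_def b0 andbT; apply/eqP => bz.
  have : Q H (0 : 'rV[R]_n) by apply: (Hiff _).2; rewrite dotv0 bz; split => //; apply: zero_in_Qt.
  move/QP => [mu [M0 [M1 Mx]]].
  by have [] := cut_lemma hH M0 M1 Mx; rewrite eqxx.
exists (fun k => c 0 k / b); split => e.
  by move=> eH; rewrite -mulrBl onH // divff // gt_eqF.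
rewrite inE => /andP[eH eG].
rewrite -mulrBl ltr_pdivrMr // mul1r lt_def.
have -> /= : c 0 e.1 - c 0 e.2 <= b by rewrite -dotv_edge; apply: Hle; apply: edge_in_Qt.
rewrite andbT; apply/eqP => eq.
have : Q H (edge_vec R e) by apply: (Hiff _).2; rewrite dotv_edge eq; split => //; apply: edge_in_Qt.
move/QP => [mu [M0 [M1 Mx]]].
have [_ H2] := cut_lemma hH M0 M1 Mx.
by have := H2 e.1 e.2 (hG _ eG); rewrite -surjective_pairing (negbTE eH) => /(_ erefl).
Qed.

Lemma pot_face G H c : H \subset G -> potH G H c -> is_face (@Q R n H) (@Qt R n G).
Proof.
move=> hHG [cH cGH].
have dE : forall e, dotv (\row_k c k) (edge_vec R e) = c e.1 - c e.2.
  by move=> e; rewrite dotv_edge !mxE.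
have le1 : forall e, e \in G -> c e.1 - c e.2 <= 1.
  move=> e eG; case eH: (e \in H); first by rewrite cH.
  by rewrite ltW // cGH // inE eH eG.
exists (\row_k c k), 1; split.
  move=> x /QtP[mu0 [mu [M00 [M0 [M1 ->]]]]].
  rewrite dotv_sum -M1 -[X in X <= _]add0r lerD //.
  apply: ler_sum => e eG; rewrite dE -[X in _ <= X]mulr1 ler_wpM2l //.
  exact: le1.
move=> x; split.
  move/QP => [mu [M0 [M1 Mx]]].
  have Qt_x : Qt G x.
    apply/QtP; exists 0, (fun e => if e \in H then mu e else 0); split => //.
    split; first by move=> e; case: ifP.
    split.
      rewrite add0r -M1 (sum_GH hHG) => [|e _ /negbTE ->] //.
      by apply: eq_bigr => e ->.
    rewrite Mx (sum_GH hHG) => [|e _ /negbTE ->]; last by rewrite scale0r.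
    by apply: eq_bigr => e ->.
  split => //; rewrite Mx dotv_sum -M1; apply: eq_bigr => e eH.
  by rewrite dE cH // mulr1.
move=> [/QtP[mu0 [mu [M00 [M0 [M1 Mx]]]]] Hd].
have Z : mu0 + \sum_(e in G) mu e * (1 - (c e.1 - c e.2)) = 0.
  under eq_bigr => e _ do rewrite mulrBr mulr1.
  rewrite sumrB addrA M1 -Hd Mx dotv_sum.
  by under eq_bigr => e _ do rewrite dE; rewrite subrr.
have nn : forall e, e \in G -> 0 <= mu e * (1 - (c e.1 - c e.2)).
  by move=> e eG; rewrite mulr_ge0 // subr_ge0 le1.
move/eqP: Z; rewrite paddr_eq0 //; last by apply: sumr_ge0.
move=> /andP[/eqP m00 /eqP S0].
have mu0E : forall e, e \in G -> e \notin H -> mu e = 0.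
  move=> e eG eH; have := psumr_eq0P nn S0 eG; move/eqP; rewrite mulf_eq0.
  case/orP => [/eqP //|]; rewrite subr_eq0 => /eqP h.
  by have := cGH e; rewrite inE eH eG -h ltxx => /(_ isT).
apply/QP; exists mu; split => //; split.
  by rewrite -(sum_GH hHG) // -M1 m00 add0r.
by rewrite Mx (sum_GH hHG) // => e eG eH; rewrite mu0E // scale0r.
Qed.

End Poly.


Section Comb.
Variables (n : nat) (G H : {set 'I_n * 'I_n}).

Lemma hun_sym : symmetric (hun H).
Proof. by move=> a b; rewrite /hun orbC. Qed.

Lemma csym : connect_sym (hun H).
Proof. exact: sym_connect_sym hun_sym. Qed.

Lemma connect_upath a b : connect (hun H) a b -> exists p, upath H a b p.
Proof.
move/connectP => [p pp ->]; case: (shortenP pp) => p' pp' up' _.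
by exists p'; rewrite /upath pp' up' eqxx.
Qed.

Lemma delta_cat u p q : delta H u (p ++ q) = delta H u p + delta H (last u p) q.
Proof. by elim: p u => [|a p IH] u /=; rewrite ?add0r // IH addrA. Qed.

Lemma delta_rcons u p x : delta H u (rcons p x) = delta H u p + step_val H (last u p) x.
Proof. by rewrite -cats1 delta_cat /= addr0. Qed.

Lemma step_pot (R : numDomainType) (c : 'I_n -> R) :
  (forall e, e \in H -> c e.1 - c e.2 = 1) ->
  forall a b, hun H a b -> (step_val H a b)%:~R = c a - c b.
Proof.
move=> cH a b; rewrite /step_val /hun; case: ifP => [ab _ | nab /= ba].
  by have := cH _ ab.
by rewrite ba; have := cH _ ba => /= h; rewrite -opprB h rmorphN1.
Qed.

Lemma delta_pot (R : numDomainType) (c : 'I_n -> R) :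
  (forall e, e \in H -> c e.1 - c e.2 = 1) ->
  forall u p, path (hun H) u p -> (delta H u p)%:~R = c u - c (last u p).
Proof.
move=> cH u p; elim: p u => [|a p IH] u /=; first by rewrite subrr.
move=> /andP[ua pa]; rewrite intrD (step_pot cH ua) IH //.
by rewrite addrA subrK.
Qed.

Lemma upath_delta (R : numDomainType) (c : 'I_n -> R) :
  (forall e, e \in H -> c e.1 - c e.2 = 1) ->
  forall u v p, upath H u v p -> (delta H u p)%:~R = c u - c v.
Proof.
move=> cH u v p /and3P[pp _ /eqP <-]; exact: delta_pot.
Qed.

Lemma pot_PA (R : realFieldType) (c : 'I_n -> R) :
  potH G H c -> path_consistent H /\ admissible G H.
Proof.
move=> [cH cGH]; split.
  move=> u v p q up uq; apply: (@intr_inj R).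
  by rewrite (upath_delta cH up) (upath_delta cH uq).
move=> w isw.
have Kw : forall i, exists us, [/\ connect (hun H) us i,
   (forall a, connect (hun H) us a -> c a <= c us) & (w i)%:~R = c us - c i].
  move=> i; have [us [cui [[vs [l [cuv [[p [pu pd]] Hmax]]]] [q [qu qd]]]]] := isw i.
  exists us; split => //; last by rewrite -qd (upath_delta cH qu).
  move=> a cua.
  have cav : connect (hun H) a vs by rewrite (connect_trans _ cuv) // csym.
  have [P uP] := connect_upath cav.
  have := Hmax a vs (delta H a P) cua cuv (ex_intro _ P (conj uP erefl)).
  rewrite -(ler_int R) (upath_delta cH uP) -pd (upath_delta cH pu).
  by rewrite lerD2r.
have Kcl : forall i j, connect (hun H) i j -> (w i)%:~R + c i = (w j)%:~R + c j.
  move=> i j cij; have [u1 [c1 m1 ->]] := Kw i; have [u2 [c2 m2 ->]] := Kw j.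
  rewrite !subrK; apply/eqP; rewrite eq_le; apply/andP; split.
    by apply: m2; rewrite (connect_trans c2) // csym (connect_trans c1).
  by apply: m1; rewrite (connect_trans c1) // (connect_trans cij) // csym.
move=> k f [fG fc fd].
rewrite -(ltr_int R) rmorph_sum /=.
pose Kf x := (w x)%:~R + c x.
have -> : \sum_(i < k.+1) ((w (f i).1 - w (f i).2)%:~R : R) =
    (\sum_(i < k.+1) (Kf (f i).1 - Kf (f (ordS i)).1)) + \sum_(i < k.+1) (c (f i).2 - c (f i).1).
  rewrite -big_split; apply: eq_bigr => i _ /=.
  rewrite /Kf -(Kcl _ _ (fc i)) intrB; ring.
rewrite sumrB [X in X - _](reindex_inj (@ordS_inj k.+1)) subrr add0r.
have -> : ((- (k.+1)%:Z)%:~R : R) = \sum_(i < k.+1) (-1).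
  by rewrite sumr_const card_ord rmorphN /= -mulNrn.
apply: ltr_sum; first by apply/hasP; exists ord0; rewrite ?mem_index_enum.
move=> i _; rewrite ltrBrDl addrC -ltrBrDl opprK addrC.
by rewrite -ltrBlDr; apply: cGH.
Qed.


Hypothesis hG : forall e, e \in G -> (e.1 < e.2)%N.
Hypothesis hHG : H \subset G.

Lemma hH e : e \in H -> (e.1 < e.2)%N.
Proof. by move=> /(subsetP hHG); apply: hG. Qed.

Lemma step_back a b : (a, b) \in H -> step_val H b a = -1.
Proof.
move=> ab; rewrite /step_val ab.
case: ifP => // ba; have := hH ab; have := hH ba => /= h1 h2.
by have := ltn_trans h1 h2; rewrite ltnn.
Qed.

Lemma upath_edge a b : (a, b) \in H -> upath H b a [:: a].
Proof.
move=> ab; have ne : b != a by apply/eqP => ba; have := hH ab; rewrite ba ltnn.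
by rewrite /upath /= /hun ab orbT inE ne eqxx.
Qed.

Lemma uniq_split (T : eqType) (x y : T) s1 s2 :
  uniq (x :: s1 ++ y :: s2) -> uniq (x :: rcons s1 y) /\ uniq (y :: s2).
Proof.
have -> : x :: s1 ++ y :: s2 = (x :: rcons s1 y) ++ s2 by rewrite /= cat_rcons.
rewrite cat_uniq => /and3P[u1 hs u2]; split => //; rewrite /= u2 andbT.
apply: contra hs => ys; apply/hasP; exists y => //.
by rewrite inE mem_rcons mem_head orbT.
Qed.

Lemma keyH (PC : path_consistent H) r0 a b Pa Pb : (a, b) \in H ->
  upath H r0 a Pa -> upath H r0 b Pb -> delta H r0 Pb = delta H r0 Pa + 1.
Proof.
move=> ab uPa uPb.
have dba : forall P, upath H b a P -> delta H b P = -1.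
  by move=> P uP; rewrite (PC _ _ _ _ uP (upath_edge ab)) /= step_back // addr0.
case/and3P: (uPa) => pPa unPa /eqP lPa.
case bin : (b \in r0 :: Pa).
  move: bin; rewrite in_cons => /orP[/eqP br | bPa].
    subst r0; rewrite (dba _ uPa).
    have : upath H b b [::] by rewrite /upath /= eqxx.
    by move=> /(PC _ _ _ _ uPb) ->.
  case/splitPr: bPa pPa unPa lPa uPa => P1 P2 pPa unPa lPa uPa.
  have [un1 un2] := uniq_split unPa.
  move: pPa; rewrite cat_path /= => /and3P[p1 hb p2].
  have uQ : upath H r0 b (rcons P1 b).
    by rewrite /upath rcons_path p1 hb un1 last_rcons eqxx.
  have uP2 : upath H b a P2.
    by rewrite /upath p2 un2 -lPa last_cat /= eqxx.
  rewrite (PC _ _ _ _ uPb uQ) -cat_rcons delta_cat last_rcons (dba _ uP2).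
  by rewrite addrK.
have uQ : upath H r0 b (rcons Pa b).
  have U : uniq (rcons (r0 :: Pa) b) by rewrite rcons_uniq bin unPa.
  by rewrite /upath rcons_path pPa lPa /hun ab last_rcons eqxx /= !andbT; exact: U.
by rewrite (PC _ _ _ _ uPb uQ) delta_rcons lPa /step_val ab.
Qed.

Lemma PC_pot (PC : path_consistent H) :
  exists p : 'I_n -> int, forall e, e \in H -> p e.1 - p e.2 = 1.
Proof.
pose r i := fingraph.root (hun H) i.
have ex : forall i, exists P, upath H (r i) i P.
  by move=> i; apply: connect_upath; rewrite csym connect_root.
pose P i := xchoose (ex i).
have PP : forall i, upath H (r i) i (P i) by move=> i; apply: xchooseP.
exists (fun i => - delta H (r i) (P i)) => -[a b] ab /=.
have rab : r a = r b.
  by apply/(fingraph.rootP csym); apply: connect1; rewrite /hun ab.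
have := PP b; rewrite -rab => Pb.
by rewrite (keyH PC ab (PP a) Pb); lia.
Qed.

End Comb.


Lemma bigmax_ub (d : Order.disp_t) (T : orderType d) (I : eqType) (r : seq I)
  (P : pred I) (F : I -> T) x0 i :
  i \in r -> P i -> (F i <= \big[Order.max/x0]_(j <- r | P j) F j)%O.
Proof.
elim: r => [|a r IH] //; rewrite inE big_cons => /orP[/eqP <-|ir] Pi.
  by rewrite Pi le_max lexx.
by case: ifP => _; rewrite ?le_max IH ?orbT.
Qed.

Lemma bigmax_att (d : Order.disp_t) (T : orderType d) (I : eqType) (r : seq I)
  (P : pred I) (F : I -> T) x0 :
  \big[Order.max/x0]_(j <- r | P j) F j = x0 \/
  exists i, [/\ i \in r, P i & \big[Order.max/x0]_(j <- r | P j) F j = F i].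
Proof.
elim: r => [|a r IH]; first by left; rewrite big_nil.
rewrite big_cons; case: ifP => Pa.
  rewrite maxEle; case: ifP => _.
    case: IH => [->|[i [ir Pi ->]]]; first by left.
    by right; exists i; rewrite inE ir orbT.
  by right; exists a; rewrite mem_head.
case: IH => [->|[i [ir Pi ->]]]; first by left.
by right; exists i; rewrite inE ir orbT.
Qed.

Fixpoint walks (T : finType) (m : nat) : seq (seq T) :=
  if m is m'.+1 then [::] :: [seq e :: s | e <- enum T, s <- walks T m'] else [:: [::]].

Lemma walks_mem (T : finType) (s : seq T) m : (size s <= m)%N -> s \in walks T m.
Proof.
elim: m s => [|m IH] [|e s] //=; rewrite ?inE ?eqxx //.
rewrite ltnS => hs; apply/orP; right.
by apply: allpairs_f; rewrite ?mem_enum ?IH.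
Qed.

Lemma find_rep (T : eqType) (r : rel T) (s : seq T) :
  ~~ pairwise (fun a b => ~~ r a b) s ->
  exists s1 z s2 y s3, [/\ s = s1 ++ (z :: s2) ++ y :: s3,
     pairwise (fun a b => ~~ r a b) (z :: s2) & r z y].
Proof.
elim/last_ind: s => [|t x IH] //; rewrite pairwise_rcons negb_and.
case Pt: (pairwise _ t); last first.
  move=> _; have [s1 [z [s2 [y [s3 [-> pw zy]]]]]] := IH (negbT Pt).
  exists s1, z, s2, y, (rcons s3 x); split => //.
  by rewrite !rcons_cat.
rewrite orbF => hx.
case/allPn: hx => a aT /negPn rax.
  case/splitPr: aT Pt => t1 t2 Pt.
  exists t1, a, t2, x, [::]; split => //.
    by rewrite rcons_cat /= cats1.
  by move: Pt; rewrite pairwise_cat => /and3P[].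
Qed.

Section Dist.
Variables (n : nat) (G H : {set 'I_n * 'I_n}).
Hypothesis hG : forall e, e \in G -> (e.1 < e.2)%N.
Hypothesis hHG : H \subset G.

Definition R2 : rel ('I_n * 'I_n) := fun e e' => connect (hun H) e.2 e'.1.
Definition endok (s : seq ('I_n * 'I_n)) x :=
  if s is e :: s0 then connect (hun H) (last e s0).2 x else true.
Definition valid s x := [&& all (mem (G :\: H)) s, sorted R2 s & endok s x].
Definition nc : rel ('I_n * 'I_n) := fun a b => ~~ connect (hun H) a.1 b.1.

Lemma endok_cat s e t x : endok (s ++ e :: t) x = endok (e :: t) x.
Proof. by case: s => //= a s; rewrite last_cat. Qed.

Lemma size_pw s : pairwise nc s -> (size s <= n)%N.
Proof.
move=> pw; have u : uniq (map fst s).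
  rewrite uniq_pairwise pairwise_map; apply: sub_pairwise pw => a b /=.
  by apply: contra => /eqP ->; rewrite connect0.
by rewrite -(size_map fst) -(card_uniqP u) -[X in (_ <= X)%N](card_ord n) max_card.
Qed.

Lemma sorted_rcons_swap s z y : sorted R2 (rcons s z) -> connect (hun H) z.1 y.1 ->
  sorted R2 (rcons s y).
Proof.
case: s => [|a s] //=; rewrite !rcons_path => /andP[-> h] zy /=.
exact: connect_trans h zy.
Qed.

Variables (R : realFieldType) (w : 'I_n -> int).
Hypothesis Adm : forall k (f : 'I_k.+1 -> 'I_n * 'I_n), comp_cycle G H f ->
    - (k.+1)%:Z < \sum_(i < k.+1) (w (f i).1 - w (f i).2).

Definition dl : R := (n.+1)%:R^-1.
Definition ae (e : 'I_n * 'I_n) : R := 1 + (w e.1 - w e.2)%:~R - dl.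
Definition wt s := \sum_(e <- s) ae e.

Lemma wt_eq s : wt s = (\sum_(e <- s) (w e.1 - w e.2))%:~R + (size s)%:R * (1 - dl).
Proof.
rewrite /wt; elim: s => [|e s IH]; first by rewrite !big_nil mul0r addr0.
by rewrite !big_cons IH /= intrD mulrS /ae; ring.
Qed.

Lemma cycle_pos z s2 : all (mem (G :\: H)) (z :: s2) -> path R2 z s2 ->
  R2 (last z s2) z -> pairwise nc (z :: s2) -> 0 < wt (z :: s2).
Proof.
move=> al pz lz pw.
set s := z :: s2; set k := size s2.
pose f (i : 'I_k.+1) := nth z s i.
have cc : comp_cycle G H f.
  split.
  - move=> i; have /allP := al; apply; exact: mem_nth.
  - move=> i; rewrite /f /=.
    idtac.
    case: (ltnP i k) => ik.
      rewrite modn_small //; exact: (pathP z pz).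
    have ie : (i : nat) = k by apply/eqP; rewrite eqn_leq ik -ltnS ltn_ord.
    rewrite ie modnn /=.
    have -> : nth z s k = last z s2.
      rewrite /s /k; case: (s2) => [|a t]; first by []. 
      by rewrite -nth_last.
    exact: lz.
  - move=> i j ij; rewrite /f.
    have P := pairwiseP z pw.
    case: (ltngtP i j) => [lt|gt|eq].
    + exact: (P i j (ltn_ord i) (ltn_ord j) lt).
    + by rewrite csym; apply: (P j i (ltn_ord j) (ltn_ord i) gt).
    + by move: ij; rewrite (val_inj eq) eqxx.
have := Adm cc.
rewrite (_ : \sum_(i < k.+1) (w (f i).1 - w (f i).2) = \sum_(e <- s) (w e.1 - w e.2)); last first.
  by rewrite (big_nth z) big_mkord.
set S := \sum_(e <- s) _ => hS.
have hk : (k.+1 <= n)%N by exact: (size_pw pw).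
have hS' : - (k%:R) <= (S%:~R : R).
  have : (- (k%:Z) <= S) by lia.
  by rewrite -(ler_int R) rmorphN.
rewrite wt_eq -/S /= mulrBr mulr1.
have dpos : 0 < dl by rewrite invr_gt0 ltr0n.
have X1 : (k.+1)%:R * dl < 1.
  by rewrite /dl ltr_pdivrMr ?ltr0n // mul1r ltr_nat ltnS.
rewrite mulrS in X1 *; lra.
Qed.


Lemma red s x : valid s x -> exists s', [/\ valid s' x, (size s' <= n)%N & wt s' <= wt s].
Proof.
have [m hs] := ubnP (size s); elim: m s hs => // m IH s hs vs.
case: (leqP (size s) n) => [le|gt]; first by exists s.
have npw : ~~ pairwise nc s by apply: contraTN gt => pw; rewrite -leqNgt size_pw.
have [s1 [z [s2 [y [s3 [sE pw zy]]]]]] := find_rep npw.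
move: vs; rewrite /valid sE => /and3P[al so en].
move: al; rewrite !all_cat => /and3P[al1 al2 al3].
move: so; rewrite /= sorted_cat_cons cat_path => /andP[so1 /andP[pz /= /andP[lzy py]]].
have en' : endok (y :: s3) x by move: en; rewrite endok_cat -cat_cons endok_cat.
have vs' : valid (s1 ++ y :: s3) x.
  rewrite /valid !all_cat al1 al3 sorted_cat_cons py andbT (sorted_rcons_swap so1 zy) /=.
  by rewrite endok_cat.
have cpos : 0 < wt (z :: s2).
  apply: cycle_pos => //; by rewrite /R2 (connect_trans lzy) // csym.
have [|s'' [v'' sz'' le'']] := IH (s1 ++ y :: s3) _ vs'.
  move: hs; rewrite sE !size_cat /= => hs; clear -hs; lia.
exists s''; split => //; apply: (le_trans le'').
have E1 : wt (s1 ++ z :: s2 ++ y :: s3) = wt s1 + wt (z :: s2) + wt (y :: s3).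
  by rewrite /wt big_cat -cat_cons big_cat; exact: addrA.
have E2 : wt (s1 ++ y :: s3) = wt s1 + wt (y :: s3) by rewrite /wt big_cat.
rewrite E1 E2.
move: cpos; generalize (wt s1) (wt (z :: s2)) (wt (y :: s3)) => a b c' hb.
lra.
Qed.

Definition dist x : R := - \big[Order.max/0]_(s <- walks _ n | valid s x) (- wt s).

Lemma dist_le s x : valid s x -> (size s <= n)%N -> dist x <= wt s.
Proof.
move=> vs sz; rewrite /dist lerNl.
exact: (bigmax_ub _ _ (walks_mem sz) vs).
Qed.

Lemma dist_att x : exists s, valid s x /\ dist x = wt s.
Proof.
case: (bigmax_att (walks _ n) (fun s => valid s x) (fun s => - wt s) 0) => [E|[s [_ vs E]]].
  by exists [::]; rewrite /dist E oppr0 /wt big_nil.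
by exists s; rewrite /dist E opprK.
Qed.

Lemma dist_cl x y : connect (hun H) x y -> dist x = dist y.
Proof.
move=> cxy; rewrite /dist; congr (- _); apply: eq_bigl => s.
rewrite /valid; case: s => //= e s; congr (_ && (_ && _)).
apply/idP/idP => h; first exact: connect_trans h cxy.
by rewrite (connect_trans h) // csym.
Qed.

Lemma relax e : e \in G :\: H -> dist e.2 <= dist e.1 + ae e.
Proof.
move=> eGH; have [s [vs ds]] := dist_att e.1.
have vr : valid (rcons s e) e.2.
  move: vs; rewrite /valid => /and3P[al so en].
  apply/and3P; split; first by rewrite all_rcons al andbT; exact: eGH.
    by case: s so en {ds al} => [|a s] /= so en //; rewrite rcons_path so /R2 en.
  case: s so en {ds al} => [|a s] so en /=.
    by rewrite connect0.
  by rewrite last_rcons connect0.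
have [s' [v' sz' le']] := red vr.
apply: (le_trans (dist_le v' sz')); apply: (le_trans le').
by rewrite ds /wt -cats1 big_cat big_seq1.
Qed.

End Dist.


Section Final.
Variables (n : nat) (G H : {set 'I_n * 'I_n}).
Hypothesis hG : forall e, e \in G -> (e.1 < e.2)%N.
Hypothesis hHG : H \subset G.

Lemma PA_pot (R : realFieldType) : path_consistent H -> admissible G H ->
  exists c : 'I_n -> R, potH G H c.
Proof.
move=> PC Adm; have [p hp] := PC_pot hG hHG PC.
pose M i := \big[Order.max/p i]_(j <- enum 'I_n | connect (hun H) i j) p j.
pose m i := - \big[Order.max/- p i]_(j <- enum 'I_n | connect (hun H) i j) (- p j).
have Mub : forall i j, connect (hun H) i j -> p j <= M i.
  by move=> i j cij; apply: bigmax_ub cij; rewrite mem_enum.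
have mlb : forall i j, connect (hun H) i j -> m i <= p j.
  by move=> i j cij; rewrite /m lerNl; apply: bigmax_ub cij; rewrite mem_enum.
have Matt : forall i, exists2 us, connect (hun H) i us & M i = p us.
  move=> i; case: (bigmax_att (enum 'I_n) (fun j => connect (hun H) i j) p (p i)) => [E|[j [_ cij E]]].
    by exists i; rewrite ?connect0.
  by exists j.
have matt : forall i, exists2 vs, connect (hun H) i vs & m i = p vs.
  move=> i; case: (bigmax_att (enum 'I_n) (fun j => connect (hun H) i j) (fun j => - p j) (- p i)) => [E|[j [_ cij E]]].
    by exists i; rewrite ?connect0 // /m E opprK.
  by exists j; rewrite // /m E opprK.
have Mcl : forall i j, connect (hun H) i j -> M i = M j.
  move=> i j cij; apply/eqP; rewrite eq_le; apply/andP; split.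
    have [u cu ->] := Matt i; apply: Mub.
    by rewrite (connect_trans _ cu) // csym.
  have [u cu ->] := Matt j; apply: Mub.
  exact: connect_trans cij cu.
pose w i := M i - p i.
have dP : forall u v P, upath H u v P -> delta H u P = p u - p v.
  by move=> u v P uP; rewrite -[delta _ _ _]intz (upath_delta hp uP).
have isw : is_weight H w.
  rewrite /is_weight.
  move=> i; have [us ius Mus] := Matt i; have [vs ivs mvs] := matt i.
  have cui : connect (hun H) us i by rewrite csym.
  exists us; split => //; split; last first.
    have [P uP] := connect_upath cui.
    by exists P; split => //; rewrite (dP _ _ _ uP) /w Mus.
  exists vs, (p us - p vs); split; [|split].
  - exact: connect_trans cui ivs.
  - have [P uP] := connect_upath (connect_trans cui ivs).
    by exists P; split => //; apply: dP uP.
  - move=> a b la cua cub [P [uP <-]]; rewrite (dP _ _ _ uP).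
    have h1 : p a <= p us by rewrite -Mus; apply: Mub; apply: connect_trans ius cua.
    have h2 : p vs <= p b by rewrite -mvs; apply: mlb; apply: connect_trans ius cub.
    by apply: lerB.
have Adm' := Adm w isw.
exists (fun x => - dist G H R w x - (w x)%:~R); split.
  move=> e eH.
  have ce : connect (hun H) e.1 e.2 by apply: connect1; rewrite /hun -surjective_pairing eH.
  rewrite (dist_cl G R w ce).
  have hw : w e.2 - w e.1 = 1 by rewrite /w (Mcl _ _ ce) -(hp _ eH); ring.
  have hw' : (w e.2)%:~R - (w e.1)%:~R = 1 :> R by rewrite -intrB hw.
  lra.
move=> e eGH; have := relax hHG R Adm' eGH; rewrite /ae intrB.
have dpos : 0 < dl n R by rewrite invr_gt0 ltr0n.
lra.
Qed.

End Final.

Theorem mainTheorem9 (R : realFieldType) (n : nat) (G H : {set 'I_n * 'I_n})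
  (hG : forall e, e \in G -> (e.1 < e.2)%N) (hHG : H \subset G) :
  is_face (@Q R n H) (@Qt R n G) <-> (path_consistent H /\ admissible G H).
Proof.
split.
  move=> hf; have [c hc] := face_pot hG hHG hf.
  exact: pot_PA hc.
move=> [PC Adm]; have [c hc] := PA_pot hG hHG R PC Adm.
exact: pot_face hHG hc.
Qed.
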